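(* Let $\rho$ be a primitive $k$th root of unity and $0<\theta<2\pi/k$. For all $N\ge1$ with $k\mid N$, $$\prod_{j=1}^N\big|\rho^je^{ij\theta/N}-1\big|^{-1}\ll N^{4k}\exp\Big(\frac Nk\cdot\frac{\mathrm{Cl}_2(k\theta)}{k\theta}\Big),$$ with implied constant depending only on $k$ and $\theta$.
   Context: $\mathrm{Cl}_2(\theta):=\sum_{k\ge1}k^{-2}\sin(k\theta)$ is the Clausen function. *)

(* Defs.v *)
From Stdlib Require Import Reals Lra Lia.
Open Scope R_scope.

Definition Cx : Type := (R * R)%type.
Definition Cone : Cx := (1, 0).
Definition Cmul (z w : Cx) : Cx :=
  (fst z * fst w - snd z * snd w, fst z * snd w + snd z * fst w).
Definition Csub (z w : Cx) : Cx := (fst z - fst w, snd z - snd w).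
Fixpoint Cpow (z : Cx) (n : nat) : Cx :=
  match n with O => Cone | S n' => Cmul z (Cpow z n') end.
Definition Cnorm (z : Cx) : R := sqrt (fst z ^ 2 + snd z ^ 2).
Definition Cexpi (t : R) : Cx := (cos t, sin t).

Definition primitive_root (rho : Cx) (k : nat) : Prop :=
  Cpow rho k = Cone /\ forall j : nat, (0 < j < k)%nat -> Cpow rho j <> Cone.

Fixpoint prod_from1 (f : nat -> R) (n : nat) : R :=
  match n with O => 1 | S n' => prod_from1 f n' * f (S n') end.

Definition Cl2_is (t l : R) : Prop :=
  infinite_sum (fun m : nat => sin (INR (S m) * t) / (INR (S m)) ^ 2) l.

(* Main.v *)
From Coquelicot Require Import Coquelicot.
Require Import Defs.
From Stdlib Require Import Reals Lra Lia Arith ZArith Ranalysis5.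
Open Scope R_scope.


Definition clt (x : R) (m : nat) : R := sin (INR (S m) * x) / (INR (S m)) ^ 2.

Lemma inv_sq_bound n : sum_f_R0 (fun m => / (INR (S m)) ^ 2) n <= 2 - / INR (S n).
Proof.
  induction n.
  - simpl. lra.
  - rewrite tech5.
    assert (H1 : 0 < INR (S n)) by (apply lt_0_INR; lia).
    assert (E : INR (S (S n)) = INR (S n) + 1) by (rewrite S_INR; auto).
    rewrite E.
    assert (/ (INR (S n) + 1) ^ 2 <= / INR (S n) - / (INR (S n) + 1)).
    { set (a := INR (S n)) in *.
      replace (/ a - / (a + 1)) with (/ (a * (a+1))) by (field; lra).
      apply Rinv_le_contravar; simpl; nra. }
    lra.
Qed.

Lemma inv_sq_cv : { l | Un_cv (sum_f_R0 (fun m => / (INR (S m)) ^ 2)) l }.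
Proof.
  apply growing_cv.
  - intro n. rewrite tech5. assert (0 < INR (S (S n))) by (apply lt_0_INR; lia).
    assert (0 < / INR (S (S n)) ^ 2) by (apply Rinv_0_lt_compat; apply pow_lt; lra). lra.
  - exists 2. intros y [n ->]. pose proof (inv_sq_bound n).
    assert (0 < / INR (S n)) by (apply Rinv_0_lt_compat; apply lt_0_INR; lia). lra.
Qed.

Lemma clt_bound x m : Rabs (clt x m) <= / (INR (S m)) ^ 2.
Proof.
  unfold clt. unfold Rdiv. rewrite Rabs_mult.
  assert (0 < INR (S m)) by (apply lt_0_INR; lia).
  rewrite (Rabs_right (/ _)). 2: { apply Rle_ge, Rlt_le, Rinv_0_lt_compat, pow_lt; lra. }
  assert (H' : Rabs (sin (INR (S m) * x)) <= 1) by (apply Rabs_le; apply SIN_bound).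
  assert (0 < / INR (S m) ^ 2) by (apply Rinv_0_lt_compat, pow_lt; lra).
  nra.
Qed.

Lemma clt_ex x : ex_series (clt x).
Proof.
  apply ex_series_Rabs.
  apply (@ex_series_le R_AbsRing R_CompleteNormedModule _ (fun m => / (INR (S m)) ^ 2)).
  - intro n. change (Rabs (Rabs (clt x n)) <= / INR (S n) ^ 2).
    rewrite Rabs_Rabsolu. apply clt_bound.
  - destruct inv_sq_cv as [l Hl]. exists l. apply is_series_Reals. exact Hl.
Qed.

Definition Cl (x : R) : R := Series (clt x).

Lemma Cl_cv x : Un_cv (sum_f_R0 (clt x)) (Cl x).
Proof. apply is_series_Reals. apply Series_correct. apply clt_ex. Qed.

Lemma Cl_is x l : Cl2_is x l -> Cl x = l.
Proof. intro H. apply (UL_sequence _ _ _ (Cl_cv x)). exact H. Qed.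

Definition cst (x : R) (m : nat) : R := cos (INR (S m) * x) / INR (S m).

Lemma clt_deriv m y : derivable_pt_lim (fun x => clt x m) y (cst y m).
Proof.
  apply is_derive_Reals. unfold clt, cst.
  assert (0 < INR (S m)) by (apply lt_0_INR; lia).
  set (a := INR (S m)) in *. clearbody a. auto_derive. auto. field. lra.
Qed.

Lemma T_deriv n y : derivable_pt_lim (fun x => sum_f_R0 (clt x) n) y (sum_f_R0 (cst y) n).
Proof.
  induction n.
  - simpl. apply clt_deriv.
  - simpl. apply (derivable_pt_lim_plus (fun x => sum_f_R0 (clt x) n) (fun x => clt x (S n))).
    exact IHn. apply clt_deriv.
Qed.

Lemma Cl_cont y : continuity_pt Cl y.
Proof.
  set (r := mkposreal (Rabs y + 1) ltac:(pose proof (Rabs_pos y); lra)).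
  set (fn := fun n x => clt x n).
  set (cv := fun x => exist (fun l => Un_cv (fun N => SP fn N x) l) (Cl x) (Cl_cv x)).
  assert (HN : CVN_r fn r).
  { exists (fun n => / (INR (S n)) ^ 2).
    destruct inv_sq_cv as [l Hl]. exists l. split.
    - intros e He. destruct (Hl e He) as [N HN]. exists N. intros n Hn.
      rewrite (sum_eq _ (fun m => / INR (S m) ^ 2)). apply HN; auto.
      intros i _. apply Rabs_right. apply Rle_ge, Rlt_le, Rinv_0_lt_compat, pow_lt, lt_0_INR; lia.
    - intros n z _. apply clt_bound. }
  pose proof (CVN_CVU fn cv r HN) as HU.
  apply (CVU_continuity _ _ _ _ HU).
  - intros n z _. apply derivable_continuous_pt. exists (sum_f_R0 (cst z) n).
    apply T_deriv.
  - unfold Boule. rewrite Rminus_0_r. simpl. lra.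
Qed.


Definition g (x : R) : R := ln (2 - 2 * cos x) / 2.

Lemma sin_half_pos t : 0 < t < 2 * PI -> 0 < sin (t / 2).
Proof. intro. apply sin_gt_0; lra. Qed.

Lemma D_eq t : 2 - 2 * cos t = 4 * sin (t/2) ^ 2.
Proof.
  replace t with (2 * (t/2)) at 1 by field. rewrite cos_2a_sin. ring.
Qed.

Lemma D_pos t : 0 < t < 2 * PI -> 0 < 2 - 2 * cos t.
Proof. intro H. rewrite D_eq. pose proof (sin_half_pos t H). nra. Qed.

Lemma sin_sum_tel n x :
  2 * sin (x/2) * sum_f_R0 (fun i => sin (INR (S i) * x)) n
  = cos (x/2) - cos ((INR n + 3/2) * x).
Proof.
  induction n.
  - simpl. 
    pose proof (form2 (x/2) ((0+3/2)*x)).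
    replace ((x/2 - (0+3/2)*x)/2) with (- (x/2)) in H by field.
    replace ((x/2 + (0+3/2)*x)/2) with (1 * x) in H by field.
    rewrite sin_neg in H. lra.
  - rewrite tech5. rewrite Rmult_plus_distr_l, IHn.
    pose proof (form2 ((INR n + 3/2) * x) ((INR (S n) + 3/2)*x)).
    repeat rewrite S_INR in *.
    replace (((INR n + 3/2) * x - (INR n + 1 + 3/2)*x)/2) with (- (x/2)) in H by field.
    replace (((INR n + 3/2) * x + (INR n + 1 + 3/2)*x)/2) with ((INR n + 1 + 1) * x) in H by field.
    rewrite sin_neg in H. lra.
Qed.

Definition Sn (n : nat) (x : R) : R := sum_f_R0 (cst x) n.

Lemma cst_deriv m y : derivable_pt_lim (fun x => cst x m) y (- sin (INR (S m) * y)).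
Proof.
  apply is_derive_Reals. unfold cst.
  assert (0 < INR (S m)) by (apply lt_0_INR; lia).
  set (a := INR (S m)) in *. clearbody a. auto_derive. auto. field. lra.
Qed.

Lemma Sn_deriv n y : derivable_pt_lim (Sn n) y (- sum_f_R0 (fun i => sin (INR (S i) * y)) n).
Proof.
  unfold Sn. induction n.
  - simpl. apply cst_deriv.
  - pose proof (derivable_pt_lim_plus _ _ _ _ _ IHn (cst_deriv (S n) y)) as H3.
    replace (- sum_f_R0 (fun i => sin (INR (S i) * y)) (S n))
      with (- sum_f_R0 (fun i => sin (INR (S i) * y)) n + - sin (INR (S (S n)) * y))
      by (rewrite tech5; ring).
    exact H3.
Qed.

Definition Phi (n : nat) (x : R) : R :=
  Sn n x - Sn n PI - ln 2 + g x - sin ((INR n + 3/2) * x) / (2 * (INR n + 3/2) * sin (x/2)).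

Definition dPhi (n : nat) (x : R) : R :=
  sin ((INR n + 3/2) * x) * cos (x/2) / (4 * (INR n + 3/2) * sin (x/2) ^ 2).

Lemma Phi_deriv n y : 0 < y < 2 * PI -> is_derive (Phi n) y (dPhi n y).
Proof.
  intro Hy.
  pose proof (sin_half_pos y Hy) as Hs.
  pose proof (D_pos y Hy) as HD.
  pose proof (pos_INR n) as Hn.
  pose proof (sin_sum_tel n y) as Htel.
  unfold Phi, dPhi.
  set (w := INR n + 3/2) in *.
  assert (Hw : 0 < w) by (unfold w; lra).
  clearbody w.
  set (E := fun x => - Sn n PI - ln 2 + g x - sin (w * x) / (2 * w * sin (x / 2))).
  set (dd := sin (w * y) * cos (y / 2) / (4 * w * sin (y / 2) ^ 2)).
  assert (HE : is_derive E y (sum_f_R0 (fun i => sin (INR (S i) * y)) n + dd)).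
  { unfold E, g, dd. auto_derive.
    - repeat split; auto; try lra;
      change (y * / 2) with (y / 2);
      assert (0 < 2 * w * sin (y/2)) by (apply Rmult_lt_0_compat; [lra|exact Hs]); lra.
    - replace (sum_f_R0 (fun i => sin (INR (S i) * y)) n) with ((cos (y/2) - cos (w * y)) / (2 * sin (y/2))).
      2: { rewrite <- Htel. field. lra. }
      change (y * / 2) with (y / 2).
      replace (sin y) with (2 * sin (y/2) * cos (y/2)).
      2: { rewrite <- sin_2a. f_equal. field. }
      replace (cos y) with (1 - 2 * sin (y/2) * sin (y/2)).
      2: { rewrite <- cos_2a_sin. f_equal. field. }
      field; repeat split; apply Rgt_not_eq; nra. }
  apply (is_derive_ext (fun x => Sn n x + E x)).
  { intro t. unfold E. cbv beta. unfold Rminus. lra. }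
  replace dd with (- sum_f_R0 (fun i => sin (INR (S i) * y)) n
                           + (sum_f_R0 (fun i => sin (INR (S i) * y)) n + dd)) by ring.
  apply is_derive_Reals. apply is_derive_Reals in HE.
  exact (derivable_pt_lim_plus _ _ _ _ _ (Sn_deriv n y) HE).
Qed.

Lemma sin_half_lb m t : 0 < m <= PI -> m <= t <= 2*PI - m -> sin (m/2) <= sin (t/2).
Proof.
  intros Hm Ht.
  pose proof (form4 (t/2) (m/2)) as H.
  assert (0 <= cos ((t/2 + m/2)/2)) by (apply cos_ge_0; lra).
  assert (0 <= sin ((t/2 - m/2)/2)) by (apply sin_ge_0; lra).
  nra.
Qed.

Lemma g_PI : g PI = ln 2.
Proof.
  unfold g. rewrite cos_PI. replace (2 - 2 * -1) with (2 * 2) by ring.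
  rewrite ln_mult by lra. field.
Qed.

Lemma is_derive_cont f x l : is_derive f x l -> continuity_pt f x.
Proof.
  intro H. apply is_derive_Reals in H. apply derivable_continuous_pt. exists l. exact H.
Qed.

Definition Kd (m : R) : R := 1/2 + PI / (4 * sin (m/2) ^ 2) + / (2 * sin (m/2)).

Lemma R_bound m n x : 0 < m <= PI -> m <= x <= 2*PI - m ->
  Rabs (Sn n x - Sn n PI - ln 2 + g x) <= Kd m / (INR n + 3/2).
Proof.
  intros Hm Hx.
  assert (Hsm : 0 < sin (m/2)) by (apply sin_gt_0; lra).
  pose proof (pos_INR n) as Hn.
  assert (Hw : 0 < INR n + 3/2) by lra.
  assert (Hin : forall t, Rmin PI x <= t <= Rmax PI x -> m <= t <= 2*PI - m).
  { intros t Ht. unfold Rmin, Rmax in Ht. destruct (Rle_dec PI x); lra. }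
  destruct (MVT_gen (Phi n) PI x (dPhi n)) as [c [Hc Heq]].
  { intros t Ht. apply Phi_deriv. pose proof (Hin t (conj (Rlt_le _ _ (proj1 Ht)) (Rlt_le _ _ (proj2 Ht)))). lra. }
  { intros t Ht. apply (is_derive_cont _ _ (dPhi n t)). apply Phi_deriv. pose proof (Hin t Ht). lra. }
  pose proof (Hin c Hc) as Hc'.
  assert (Hsc : sin (m/2) <= sin (c/2)) by (apply sin_half_lb; lra).
  assert (HdPhi : Rabs (dPhi n c) <= / (4 * (INR n + 3/2) * sin (m/2) ^ 2)).
  { unfold dPhi. unfold Rdiv. rewrite Rabs_mult, Rabs_mult.
    rewrite (Rabs_right (/ _)).
    2: { apply Rle_ge, Rlt_le, Rinv_0_lt_compat. apply Rmult_lt_0_compat. lra. apply pow_lt. lra. }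
    assert (A1 : Rabs (sin ((INR n + 3 / 2) * c)) <= 1) by (apply Rabs_le, SIN_bound).
    assert (A2 : Rabs (cos (c/2)) <= 1) by (apply Rabs_le, COS_bound).
    assert (A3 : / (4 * (INR n + 3 / 2) * sin (c / 2) ^ 2) <= / (4 * (INR n + 3 / 2) * sin (m / 2) ^ 2)).
    { apply Rinv_le_contravar. apply Rmult_lt_0_compat. lra. apply pow_lt. lra.
      apply Rmult_le_compat_l. lra. simpl. nra. }
    assert (0 <= / (4 * (INR n + 3 / 2) * sin (c / 2) ^ 2)).
    { apply Rlt_le, Rinv_0_lt_compat. apply Rmult_lt_0_compat. lra. apply pow_lt. lra. }
    pose proof (Rabs_pos (sin ((INR n + 3 / 2) * c))).
    pose proof (Rabs_pos (cos (c/2))).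
    assert (Rabs (sin ((INR n + 3 / 2) * c)) * Rabs (cos (c / 2)) <= 1) by nra.
    nra. }
  assert (HPhiPI : Phi n PI = - sin ((INR n + 3/2) * PI) / (2 * (INR n + 3/2))).
  { unfold Phi. rewrite g_PI. replace (PI/2) with (PI/2) by reflexivity. rewrite sin_PI2. field. lra. }
  assert (Hdx : Rabs (x - PI) <= PI) by (apply Rabs_le; lra).
  assert (HPhix : Rabs (Phi n x) <= / (2 * (INR n + 3/2)) + PI * / (4 * (INR n + 3/2) * sin (m/2) ^ 2)).
  { replace (Phi n x) with (Phi n PI + dPhi n c * (x - PI)) by lra.
    eapply Rle_trans. apply Rabs_triang.
    apply Rplus_le_compat.
    - rewrite HPhiPI. unfold Rdiv. rewrite Rabs_mult, Rabs_Ropp.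
      rewrite (Rabs_right (/ _)) by (apply Rle_ge, Rlt_le, Rinv_0_lt_compat; lra).
      assert (Rabs (sin ((INR n + 3 / 2) * PI)) <= 1) by (apply Rabs_le, SIN_bound).
      assert (0 < / (2 * (INR n + 3 / 2))) by (apply Rinv_0_lt_compat; lra). nra.
    - rewrite Rabs_mult. pose proof (Rabs_pos (dPhi n c)). pose proof (Rabs_pos (x - PI)).
      assert (0 <= / (4 * (INR n + 3 / 2) * sin (m / 2) ^ 2)).
      { apply Rlt_le, Rinv_0_lt_compat. apply Rmult_lt_0_compat. lra. apply pow_lt. lra. }
      nra. }
  assert (Hsx : sin (m/2) <= sin (x/2)) by (apply sin_half_lb; lra).
  assert (HQ : Rabs (sin ((INR n + 3/2) * x) / (2 * (INR n + 3/2) * sin (x/2))) <= / (2 * (INR n + 3/2) * sin (m/2))).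
  { unfold Rdiv. rewrite Rabs_mult.
    rewrite (Rabs_right (/ _)).
    2: { apply Rle_ge, Rlt_le, Rinv_0_lt_compat. apply Rmult_lt_0_compat; lra. }
    assert (Rabs (sin ((INR n + 3 / 2) * x)) <= 1) by (apply Rabs_le, SIN_bound).
    assert (A3 : / (2 * (INR n + 3 / 2) * sin (x / 2)) <= / (2 * (INR n + 3 / 2) * sin (m / 2))).
    { apply Rinv_le_contravar. apply Rmult_lt_0_compat; lra. apply Rmult_le_compat_l; lra. }
    assert (0 <= / (2 * (INR n + 3 / 2) * sin (x / 2))).
    { apply Rlt_le, Rinv_0_lt_compat. apply Rmult_lt_0_compat; lra. }
    pose proof (Rabs_pos (sin ((INR n + 3 / 2) * x))). nra. }
  replace (Sn n x - Sn n PI - ln 2 + g x) with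
    (Phi n x + sin ((INR n + 3/2) * x) / (2 * (INR n + 3/2) * sin (x/2))) by (unfold Phi; ring).
  eapply Rle_trans. apply Rabs_triang.
  replace (Kd m / (INR n + 3/2)) with
    (/ (2 * (INR n + 3/2)) + PI * / (4 * (INR n + 3/2) * sin (m/2) ^ 2) + / (2 * (INR n + 3/2) * sin (m/2))).
  2: { unfold Kd. field. lra. }
  lra.
Qed.


Lemma nat_big (M : R) : exists N : nat, M < INR N.
Proof.
  destruct (archimed M) as [H1 H2].
  destruct (Z_le_gt_dec 0 (up M)) as [Hz|Hz].
  - exists (Z.to_nat (up M)). rewrite INR_IZR_INZ, Z2Nat.id by lia. lra.
  - exists 0%nat. simpl. assert (Hz2 : (up M < 0)%Z) by lia. apply IZR_lt in Hz2. lra.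
Qed.

Lemma cos_nPI n : cos (INR n * PI) = (-1) ^ n.
Proof.
  induction n.
  - simpl. rewrite Rmult_0_l. apply cos_0.
  - rewrite S_INR. replace ((INR n + 1) * PI) with (INR n * PI + PI) by ring.
    rewrite neg_cos, IHn. simpl. ring.
Qed.

Definition Uinv (n : nat) : R := / INR (S n).

Lemma Uinv_dec : Un_decreasing Uinv.
Proof.
  intro n. unfold Uinv. apply Rinv_le_contravar. apply lt_0_INR; lia.
  apply le_INR; lia.
Qed.

Lemma Uinv_cv : Un_cv Uinv 0.
Proof.
  unfold Uinv. apply (cv_infty_cv_0 (fun n => INR (S n))).
  intro M. destruct (nat_big M) as [N HN]. exists N. intros n Hn.
  apply Rlt_le_trans with (INR N); auto. apply le_INR. lia.
Qed.

Lemma Sn_PI_eq n : Sn n PI = - sum_f_R0 (tg_alt Uinv) n.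
Proof.
  unfold Sn. induction n.
  - simpl. unfold cst, tg_alt, Uinv. rewrite cos_nPI. simpl. field.
  - rewrite !tech5, IHn. unfold cst, tg_alt, Uinv. rewrite cos_nPI. simpl pow.
    assert (0 < INR (S (S n))) by (apply lt_0_INR; lia). field. lra.
Qed.

Definition Lpi : R := - proj1_sig (alternated_series Uinv Uinv_dec Uinv_cv).

Lemma Sn_PI_cv : Un_cv (fun n => Sn n PI) Lpi.
Proof.
  unfold Lpi. destruct (alternated_series Uinv Uinv_dec Uinv_cv) as [l Hl]. simpl.
  intros e He. destruct (Hl e He) as [N HN]. exists N. intros n Hn.
  unfold Rdist in *. rewrite Sn_PI_eq.
  replace (- sum_f_R0 (tg_alt Uinv) n - - l) with (- (sum_f_R0 (tg_alt Uinv) n - l)) by ring.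
  rewrite Rabs_Ropp. apply HN; auto.
Qed.

Definition cc : R := Lpi + ln 2.

Lemma g_deriv y : 0 < y < 2 * PI -> derivable_pt_lim g y (sin y / (2 - 2 * cos y)).
Proof.
  intro Hy. pose proof (D_pos y Hy). apply is_derive_Reals. unfold g.
  auto_derive. lra. field. lra.
Qed.

Lemma g_cont y : 0 < y < 2 * PI -> continuity_pt g y.
Proof. intro Hy. apply derivable_continuous_pt. eexists. apply g_deriv. exact Hy. Qed.

Lemma Cl_deriv x0 : 0 < x0 < 2 * PI -> derivable_pt_lim Cl x0 (cc - g x0).
Proof.
  intro Hx0.
  set (m := Rmin x0 (2 * PI - x0) / 2).
  assert (Hm : 0 < m).
  { unfold m, Rmin. destruct (Rle_dec x0 (2 * PI - x0)); lra. }
  assert (Hm2 : m <= x0 / 2 /\ m <= (2*PI - x0)/2).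
  { unfold m, Rmin. destruct (Rle_dec x0 (2 * PI - x0)); lra. }
  set (r := mkposreal m Hm).
  assert (Hball : forall y, Boule x0 r y -> m <= y <= 2 * PI - m).
  { intros y Hy. unfold Boule in Hy. simpl in Hy. apply Rabs_def2 in Hy. lra. }
  assert (HmPI : 0 < m <= PI) by lra.
  apply (derivable_pt_lim_CVU (fun n x => sum_f_R0 (clt x) n) Sn Cl (fun y => cc - g y) x0 x0 r).
  - unfold Boule. rewrite Rminus_diag, Rabs_R0. simpl. lra.
  - intros y n _. apply T_deriv.
  - intros y _. apply Cl_cv.
  - intros eps Heps.
    destruct (Sn_PI_cv (eps/2)) as [N1 HN1]. lra.
    destruct (nat_big (Kd m * 2 / eps)) as [N2 HN2].
    exists (max N1 N2). intros n y Hn Hy.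
    pose proof (Hball y Hy) as Hy'.
    pose proof (R_bound m n y HmPI Hy') as HR.
    assert (Hkd : Kd m / (INR n + 3/2) < eps / 2).
    { assert (INR N2 <= INR n) by (apply le_INR; lia).
      assert (0 < eps) by lra.
      apply (Rmult_lt_reg_r (INR n + 3/2)). pose proof (pos_INR n). lra.
      unfold Rdiv. rewrite Rmult_assoc, Rinv_l. 2: { pose proof (pos_INR n). lra. }
      rewrite Rmult_1_r.
      assert (Kd m * 2 / eps * eps = Kd m * 2) by (field; lra).
      assert (Kd m * 2 < INR n * eps).
      { assert (Kd m * 2 / eps < INR n) by lra.
        apply (Rmult_lt_compat_r eps) in H2; lra. }
      nra. }
    assert (HS : Rabs (Sn n PI - Lpi) < eps / 2) by (apply HN1; lia).
    unfold Rdist in HS.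
    replace (cc - g y - Sn n y) with (- (Sn n y - Sn n PI - ln 2 + g y) - (Sn n PI - Lpi)) by (unfold cc; ring).
    eapply Rle_lt_trans. apply Rabs_triang. rewrite Rabs_Ropp, Rabs_Ropp. lra.
  - intros y Hy. pose proof (Hball y Hy).
    apply continuity_pt_minus. apply continuity_pt_const. intros a b; reflexivity.
    apply g_cont. lra.
Qed.


Fixpoint psum (f : nat -> R) (n : nat) : R :=
  match n with O => 0 | S n' => psum f n' + f n' end.
Fixpoint sum1 (f : nat -> R) (n : nat) : R :=
  match n with O => 0 | S n' => sum1 f n' + f (S n') end.

Lemma psum_S f n : psum f (S n) = sum_f_R0 f n.
Proof. induction n. simpl. ring. rewrite tech5. simpl in *. rewrite IHn. ring. Qed.

Lemma psum_ext f h n : (forall i, (i < n)%nat -> f i = h i) -> psum f n = psum h n.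
Proof. induction n; intro H; simpl. auto. rewrite IHn, H. auto. lia. intros; apply H; lia. Qed.

Lemma sum1_ext f h n : (forall i, (1 <= i <= n)%nat -> f i = h i) -> sum1 f n = sum1 h n.
Proof. induction n; intro H; simpl. auto. rewrite IHn, H. auto. lia. intros; apply H; lia. Qed.

Lemma psum_split f p q : psum f (p + q) = psum f p + psum (fun j => f (p + j)%nat) q.
Proof. induction q; simpl. rewrite Nat.add_0_r. ring. rewrite Nat.add_succ_r. simpl. rewrite IHq. ring. Qed.

Lemma psum_zero f n : (forall i, (i < n)%nat -> f i = 0) -> psum f n = 0.
Proof. intro H. rewrite (psum_ext f (fun _ => 0)) by auto. clear H. induction n; simpl. auto. rewrite IHn. ring. Qed.

Lemma sum1_zero f n : (forall i, (1 <= i <= n)%nat -> f i = 0) -> sum1 f n = 0.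
Proof. intro H. rewrite (sum1_ext f (fun _ => 0)) by auto. clear H. induction n; simpl. auto. rewrite IHn. ring. Qed.

Lemma sum1_plus f h n : sum1 (fun i => f i + h i) n = sum1 f n + sum1 h n.
Proof. induction n; simpl. ring. rewrite IHn. ring. Qed.
Lemma psum_plus f h n : psum (fun i => f i + h i) n = psum f n + psum h n.
Proof. induction n; simpl. ring. rewrite IHn. ring. Qed.
Lemma sum1_scal c f n : sum1 (fun i => c * f i) n = c * sum1 f n.
Proof. induction n; simpl. ring. rewrite IHn. ring. Qed.
Lemma psum_scal c f n : psum (fun i => c * f i) n = c * psum f n.
Proof. induction n; simpl. ring. rewrite IHn. ring. Qed.
Lemma sum1_const c n : sum1 (fun _ => c) n = INR n * c.
Proof. induction n; simpl sum1. simpl. ring. rewrite IHn, S_INR. ring. Qed.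
Lemma psum_le f h n : (forall i, (i < n)%nat -> f i <= h i) -> psum f n <= psum h n.
Proof. induction n; intro H; simpl. lra. apply Rplus_le_compat. apply IHn. intros; apply H; lia. apply H; lia. Qed.
Lemma sum1_le f h n : (forall i, (1 <= i <= n)%nat -> f i <= h i) -> sum1 f n <= sum1 h n.
Proof. induction n; intro H; simpl. lra. apply Rplus_le_compat. apply IHn. intros; apply H; lia. apply H; lia. Qed.

Lemma sum1_psum_swap (F : nat -> nat -> R) k n :
  sum1 (fun r => psum (F r) n) k = psum (fun i => sum1 (fun r => F r i) k) n.
Proof.
  induction n; simpl.
  - apply sum1_zero. auto.
  - rewrite sum1_plus, IHn. auto.
Qed.

Lemma sum1_cv (u : nat -> nat -> R) (l : nat -> R) k :
  (forall r, Un_cv (u r) (l r)) -> Un_cv (fun n => sum1 (fun r => u r n) k) (sum1 l k).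
Proof.
  intro H. induction k; simpl.
  - intros e He. exists 0%nat. intros. unfold Rdist. rewrite Rminus_diag, Rabs_R0. lra.
  - apply CV_plus. exact IHk. apply H.
Qed.

Lemma cv_subseq (u : nat -> R) l (phi : nat -> nat) :
  Un_cv u l -> (forall n, (n <= phi n)%nat) -> Un_cv (fun n => u (phi n)) l.
Proof.
  intros H Hp e He. destruct (H e He) as [N HN]. exists N. intros n Hn. apply HN.
  specialize (Hp n). lia.
Qed.

Lemma sin_sum_tel2 y b K :
  2 * sin (b/2) * sum1 (fun r => sin (y + INR r * b)) K = cos (y + b/2) - cos (y + (INR K + 1/2) * b).
Proof.
  induction K.
  - simpl. replace (y + (0 + 1/2) * b) with (y + b/2) by field. ring.
  - cbn [sum1]. rewrite Rmult_plus_distr_l, IHK.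
    pose proof (form2 (y + (INR K + 1/2) * b) (y + (INR (S K) + 1/2) * b)) as H.
    rewrite S_INR in *.
    replace ((y + (INR K + 1/2) * b - (y + (INR K + 1 + 1/2) * b))/2) with (- (b/2)) in H by field.
    replace ((y + (INR K + 1/2) * b + (y + (INR K + 1 + 1/2) * b))/2) with (y + (INR K + 1) * b) in H by field.
    rewrite sin_neg in H. lra.
Qed.

Lemma sin_sum_zero y b k s : INR k * b = 2 * INR s * PI -> cos b <> 1 ->
  sum1 (fun r => sin (y + INR r * b)) k = 0.
Proof.
  intros Hk Hb.
  pose proof (sin_sum_tel2 y b k) as H.
  replace (y + (INR k + 1/2) * b) with (y + b/2 + 2 * INR s * PI) in H by lra.
  rewrite cos_period in H.
  assert (Hs : sin (b/2) <> 0).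
  { intro H0. apply Hb. replace b with (2 * (b/2)) by field. rewrite cos_2a_sin, H0. ring. }
  assert (2 * sin (b/2) <> 0) by lra.
  apply (Rmult_eq_reg_l (2 * sin (b/2))); auto. lra.
Qed.

Lemma mod_small_add k L j : (j < k)%nat -> ((k * L + j) mod k = j)%nat.
Proof. intro H. symmetry. apply (Nat.mod_unique _ _ L); auto. Qed.

Lemma psum_last f n : (0 < n)%nat -> psum f n = psum f (n - 1) + f (n - 1)%nat.
Proof. intro H. destruct n. lia. simpl. rewrite Nat.sub_0_r. reflexivity. Qed.

Section Ident.
Variables (k s : nat) (alpha x : R).
Hypothesis Hk : (0 < k)%nat.
Hypothesis Hks : INR k * alpha = 2 * INR s * PI.
Hypothesis Hprim : forall n : nat, (0 < n)%nat -> (n mod k <> 0)%nat -> cos (INR n * alpha) <> 1.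

Definition Aterm (i : nat) : R := sum1 (fun r => clt (x + INR r * alpha) i) k.

Lemma Aterm_eq i : Aterm i =
  sum1 (fun r => sin (INR (S i) * x + INR r * (INR (S i) * alpha))) k / INR (S i) ^ 2.
Proof.
  unfold Aterm, clt, Rdiv. rewrite Rmult_comm, <- sum1_scal.
  apply sum1_ext. intros r _. rewrite Rmult_comm. f_equal. f_equal. ring.
Qed.

Lemma Aterm_zero i : ((S i) mod k <> 0)%nat -> Aterm i = 0.
Proof.
  intro H. rewrite Aterm_eq. rewrite (sin_sum_zero _ _ k (s * S i)). unfold Rdiv; ring.
  - rewrite mult_INR. replace (INR k * (INR (S i) * alpha)) with (INR (S i) * (INR k * alpha)) by ring.
    rewrite Hks. ring.
  - apply Hprim; auto. lia.
Qed.

Lemma Aterm_block L : Aterm (k * L + (k - 1)) = clt (INR k * x) L / INR k.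
Proof.
  rewrite Aterm_eq.
  assert (HS : (S (k * L + (k - 1)) = k * S L)%nat) by lia.
  rewrite HS.
  rewrite (sum1_ext _ (fun _ => sin (INR (k * S L) * x))).
  2: { intros r _. rewrite !mult_INR.
       replace (INR r * (INR k * INR (S L) * alpha)) with (2 * INR (r * S L * s) * PI).
       2: { rewrite !mult_INR. replace (INR k * INR (S L) * alpha) with (INR (S L) * (INR k * alpha)) by ring.
            rewrite Hks. ring. }
       rewrite sin_period. f_equal. }
  rewrite sum1_const. unfold clt. rewrite mult_INR.
  assert (0 < INR k) by (apply lt_0_INR; lia).
  assert (0 < INR (S L)) by (apply lt_0_INR; lia).
  replace (INR k * INR (S L) * x) with (INR (S L) * (INR k * x)) by ring.
  field. lra.
Qed.

Lemma Aterm_psum L : psum Aterm (k * L) = psum (fun l => clt (INR k * x) l / INR k) L.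
Proof.
  induction L.
  - rewrite Nat.mul_0_r. reflexivity.
  - replace (k * S L)%nat with (k * L + k)%nat by lia.
    rewrite psum_split, IHL. simpl psum at 3. f_equal.
    replace (psum (fun j => Aterm (k * L + j)) k) with
      (psum (fun j => Aterm (k * L + j)) (k - 1) + Aterm (k * L + (k - 1))).
    2: { symmetry. apply psum_last. exact Hk. }
    rewrite psum_zero.
    + rewrite Aterm_block. ring.
    + intros j Hj. apply Aterm_zero.
      replace (S (k * L + j)) with (k * L + S j)%nat by lia.
      rewrite mod_small_add by lia. lia.
Qed.

Lemma Cl_sum_id : sum1 (fun r => Cl (x + INR r * alpha)) k = Cl (INR k * x) / INR k.
Proof.
  assert (H1 : Un_cv (fun n => sum_f_R0 Aterm n) (sum1 (fun r => Cl (x + INR r * alpha)) k)).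
  { apply (Un_cv_ext (fun n => sum1 (fun r => sum_f_R0 (clt (x + INR r * alpha)) n) k)).
    - intro n. rewrite <- psum_S. unfold Aterm. rewrite <- sum1_psum_swap.
      apply sum1_ext. intros. rewrite psum_S. reflexivity.
    - apply sum1_cv. intro r. apply Cl_cv. }
  pose proof (cv_subseq _ _ (fun L => k * S L - 1)%nat H1) as H2.
  assert (H3 : Un_cv (fun L => sum_f_R0 Aterm (k * S L - 1)) (Cl (INR k * x) / INR k)).
  { apply (Un_cv_ext (fun L => sum_f_R0 (clt (INR k * x)) L * / INR k)).
    - intro L. symmetry. rewrite <- psum_S. replace (S (k * S L - 1)) with (k * S L)%nat by lia.
      rewrite Aterm_psum, psum_S. rewrite (Rmult_comm (sum_f_R0 _ _)), scal_sum. reflexivity.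
    - apply CV_mult. apply Cl_cv. intros e He. exists 0%nat. intros. unfold Rdist.
      rewrite Rminus_diag, Rabs_R0. lra. }
  assert (Hphi : forall n, (n <= k * S n - 1)%nat) by (intro n; nia).
  apply (UL_sequence _ _ _ (H2 Hphi) H3).
Qed.
End Ident.


Lemma Cl_period y q : Cl (y + 2 * INR q * PI) = Cl y.
Proof.
  unfold Cl. apply Series_ext. intro i. unfold clt. f_equal.
  replace (INR (S i) * (y + 2 * INR q * PI)) with (INR (S i) * y + 2 * INR (S i * q) * PI)
    by (rewrite mult_INR; ring).
  apply sin_period.
Qed.

Lemma dpl_ext f h x l : (forall t, f t = h t) -> derivable_pt_lim f x l -> derivable_pt_lim h x l.
Proof.
  intros E H. apply is_derive_Reals. apply is_derive_Reals in H.
  apply (is_derive_ext f). exact E. exact H.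
Qed.

Lemma Cl_lin_deriv a b x : 0 < a * x + b < 2 * PI ->
  derivable_pt_lim (fun t => Cl (a * t + b)) x (a * (cc - g (a * x + b))).
Proof.
  intro H.
  assert (H1 : derivable_pt_lim (fun t => a * t + b) x a).
  { apply is_derive_Reals. auto_derive. auto. ring. }
  pose proof (derivable_pt_lim_comp _ Cl x a (cc - g (a * x + b)) H1 (Cl_deriv _ H)) as H2.
  rewrite Rmult_comm. exact H2.
Qed.

Lemma cc_zero : cc = 0.
Proof.
  assert (Hid : forall t, Cl (1 * t + PI) + Cl (1 * t + 0) = / 2 * Cl (2 * t + 0)).
  { intro t.
    assert (Hprim : forall n : nat, (0 < n)%nat -> (n mod 2 <> 0)%nat -> cos (INR n * PI) <> 1).
    { intros n _ Hn. rewrite cos_nPI.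
      assert (Hn2 : n = S (2 * (n / 2))).
      { pose proof (Nat.div_mod n 2 ltac:(lia)). pose proof (Nat.mod_upper_bound n 2 ltac:(lia)). lia. }
      rewrite Hn2, pow_1_odd. lra. }
    pose proof (Cl_sum_id 2 1 PI t ltac:(lia) ltac:(simpl; ring) Hprim) as H.
    simpl sum1 in H.
    replace (t + 1 * PI) with (1 * t + PI) in H by ring.
    replace (t + (1 + 1) * PI) with (t + 2 * INR 1 * PI) in H by (simpl; ring).
    rewrite Cl_period in H.
    replace (1 * t + 0) with t by ring. replace (2 * t + 0) with ((1+1) * t) by ring.
    replace (INR 2) with (1+1) in H by (simpl; ring). rewrite Rplus_0_l in H. rewrite H. field. }
  assert (HPI := PI_RGT_0).
  assert (D1 : derivable_pt_lim (fun t => Cl (1 * t + PI) + Cl (1 * t + 0)) (PI/2)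
                 (1 * (cc - g (1 * (PI/2) + PI)) + 1 * (cc - g (1 * (PI/2) + 0)))).
  { apply (derivable_pt_lim_plus (fun t => Cl (1 * t + PI)) (fun t => Cl (1 * t + 0)));
    apply Cl_lin_deriv; lra. }
  assert (D2 : derivable_pt_lim (fun t => / 2 * Cl (2 * t + 0)) (PI/2)
                 (/ 2 * (2 * (cc - g (2 * (PI/2) + 0))))).
  { apply (derivable_pt_lim_scal (fun t => Cl (2 * t + 0))). apply Cl_lin_deriv; lra. }
  apply (dpl_ext _ _ _ _ Hid) in D1.
  pose proof (uniqueness_limite _ _ _ _ D1 D2) as E.
  replace (1 * (PI / 2) + PI) with (3 * (PI / 2)) in E by field.
  replace (1 * (PI / 2) + 0) with (PI / 2) in E by field.
  replace (2 * (PI / 2) + 0) with PI in E by field.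
  rewrite g_PI in E. unfold g in E. rewrite cos_3PI2, cos_PI2 in E.
  replace (2 - 2 * 0) with 2 in E by ring. lra.
Qed.


Lemma Cl_der y : 0 < y < 2 * PI -> is_derive Cl y (- g y).
Proof. intro H. apply is_derive_Reals. replace (- g y) with (cc - g y) by (rewrite cc_zero; ring). apply Cl_deriv; auto. Qed.

Lemma Cl_lin_der a b x : 0 < a * x + b < 2 * PI ->
  is_derive (fun t => Cl (a * t + b)) x (- a * g (a * x + b)).
Proof.
  intro H. apply is_derive_Reals. replace (- a * g (a * x + b)) with (a * (cc - g (a * x + b))) by (rewrite cc_zero; ring).
  apply Cl_lin_deriv; auto.
Qed.

Lemma ln_nonpos x : x <= 0 -> ln x = 0.
Proof. intro H. unfold ln. destruct (Rlt_dec 0 x) as [h|h]; [exfalso; lra | reflexivity]. Qed.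

Lemma ln2_pos : 0 < ln 2.
Proof. rewrite <- ln_1. apply ln_increasing; lra. Qed.

Lemma g_le x : g x <= ln 2.
Proof.
  unfold g. destruct (Rlt_dec 0 (2 - 2 * cos x)).
  - assert (ln (2 - 2 * cos x) <= ln 4).
    { apply ln_le. auto. pose proof (COS_bound x). lra. }
    replace 4 with (2 * 2) in H by ring. rewrite ln_mult in H by lra. lra.
  - rewrite ln_nonpos by lra. pose proof ln2_pos. lra.
Qed.

Lemma cos_le_m m x : 0 < m <= PI -> m <= x <= 2 * PI - m -> cos x <= cos m.
Proof.
  intros Hm Hx. destruct (Rle_dec x PI).
  - apply cos_decr_1; lra.
  - assert (E : cos x = cos (2 * PI - x)) by (rewrite cos_minus, cos_2PI, sin_2PI; ring).
    rewrite E. apply cos_decr_1; lra.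
Qed.

Lemma g_ge_m m x : 0 < m <= PI -> m <= x <= 2 * PI - m -> g m <= g x.
Proof.
  intros Hm Hx. unfold g. pose proof (cos_le_m m x Hm Hx).
  assert (0 < 2 - 2 * cos m) by (apply D_pos; lra).
  assert (ln (2 - 2 * cos m) <= ln (2 - 2 * cos x)) by (apply ln_le; lra). lra.
Qed.

Lemma concave_g y u : 0 <= u -> 0 < y - u -> y + u < 2 * PI -> g (y + u) + g (y - u) <= 2 * g y.
Proof.
  intros Hu H1 H2.
  assert (Dp : 0 < 2 - 2 * cos (y + u)) by (apply D_pos; lra).
  assert (Dm : 0 < 2 - 2 * cos (y - u)) by (apply D_pos; lra).
  assert (Dy : 0 < 2 - 2 * cos y) by (apply D_pos; lra).
  assert (Hprod : (2 - 2 * cos (y + u)) * (2 - 2 * cos (y - u)) = 4 * (cos u - cos y) ^ 2).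
  { rewrite cos_plus, cos_minus. pose proof (sin2_cos2 y). pose proof (sin2_cos2 u).
    unfold Rsqr in *. nra. }
  assert (Hc : 0 <= cos u - cos y).
  { rewrite form2. assert (0 < sin ((u - y) / 2) * -1) .
    { replace (sin ((u - y)/2) * -1) with (sin ((y - u)/2)).
      apply sin_gt_0; lra. replace ((u - y)/2) with (- ((y-u)/2)) by field. rewrite sin_neg. ring. }
    assert (0 < sin ((u + y)/2)) by (apply sin_gt_0; lra). nra. }
  assert (Hc2 : cos u - cos y <= 1 - cos y) by (pose proof (COS_bound u); lra).
  unfold g.
  assert (ln ((2 - 2 * cos (y + u)) * (2 - 2 * cos (y - u))) <= ln ((2 - 2 * cos y) * (2 - 2 * cos y))).
  { apply ln_le. apply Rmult_lt_0_compat; auto. rewrite Hprod. nra. }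
  rewrite !ln_mult in H by lra. lra.
Qed.

Lemma mid_ineq y t : 0 <= t -> 0 < y - t -> y + t < 2 * PI -> Cl (y - t) - Cl (y + t) <= 2 * t * g y.
Proof.
  intros Ht H1 H2.
  set (Psi := fun u => Cl (-1 * u + y) - Cl (1 * u + y) - 2 * u * g y).
  set (dPsi := fun u => g (-1 * u + y) + g (1 * u + y) - 2 * g y).
  assert (Hd : forall u, 0 <= u <= t -> is_derive Psi u (dPsi u)).
  { intros u Hu.
    assert (A1 := Cl_lin_der (-1) y u ltac:(lra)). apply is_derive_Reals in A1.
    assert (A2 := Cl_lin_der 1 y u ltac:(lra)). apply is_derive_Reals in A2.
    assert (A3 : derivable_pt_lim (fun u => 2 * u * g y) u (2 * g y)).
    { apply is_derive_Reals. auto_derive. auto. ring. }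
    pose proof (derivable_pt_lim_minus _ _ _ _ _ (derivable_pt_lim_minus _ _ _ _ _ A1 A2) A3) as A.
    apply is_derive_Reals.
    replace (dPsi u) with (- -1 * g (-1 * u + y) - - 1 * g (1 * u + y) - 2 * g y) by (unfold dPsi; ring).
    exact A. }
  destruct (MVT_gen Psi 0 t dPsi) as [c [Hc E]].
  { intros u Hu. rewrite Rmin_left in Hu by lra. rewrite Rmax_right in Hu by lra. apply Hd. lra. }
  { intros u Hu. rewrite Rmin_left in Hu by lra. rewrite Rmax_right in Hu by lra.
    apply (is_derive_cont _ _ (dPsi u)). apply Hd. lra. }
  rewrite Rmin_left in Hc by lra. rewrite Rmax_right in Hc by lra.
  assert (dPsi c <= 0).
  { unfold dPsi. pose proof (concave_g y c ltac:(lra) ltac:(lra) ltac:(lra)).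
    replace (-1 * c + y) with (y - c) by ring. replace (1 * c + y) with (y + c) by ring. lra. }
  unfold Psi in E. replace (-1 * t + y) with (y - t) in E by ring. replace (1 * t + y) with (y + t) in E by ring.
  replace (-1 * 0 + y) with y in E by ring. replace (1 * 0 + y) with y in E by ring.
  assert (dPsi c * (t - 0) <= 0) by nra. lra.
Qed.

Lemma Cl_up a b : 0 <= a <= b -> b < 2 * PI -> Cl a - Cl b <= (b - a) * ln 2.
Proof.
  intros Ha Hb.
  destruct (MVT_gen Cl a b (fun x => - g x)) as [c [Hc E]].
  { intros u Hu. rewrite Rmin_left in Hu by lra. rewrite Rmax_right in Hu by lra. apply Cl_der. lra. }
  { intros u Hu. apply Cl_cont. }
  pose proof (g_le c). nra.
Qed.

Lemma Cl_lip m a b : 0 < m <= PI -> m <= a <= b -> b <= 2 * PI - m ->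
  Rabs (Cl b - Cl a) <= (b - a) * (ln 2 + Rabs (g m)).
Proof.
  intros Hm Ha Hb.
  destruct (MVT_gen Cl a b (fun x => - g x)) as [c [Hc E]].
  { intros u Hu. rewrite Rmin_left in Hu by lra. rewrite Rmax_right in Hu by lra. apply Cl_der. lra. }
  { intros u Hu. apply Cl_cont. }
  rewrite Rmin_left in Hc by lra. rewrite Rmax_right in Hc by lra.
  pose proof (g_le c). pose proof (g_ge_m m c Hm ltac:(lra)).
  rewrite E. rewrite Rabs_mult, Rabs_Ropp, (Rabs_right (b - a)) by lra.
  assert (Rabs (g c) <= ln 2 + Rabs (g m)).
  { pose proof ln2_pos. apply Rabs_le. split.
    - pose proof (Rabs_Ropp (g m)). pose proof (Rle_abs (- g m)). lra.
    - pose proof (Rabs_pos (g m)). lra. }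
  assert (0 <= b - a) by lra. nra.
Qed.

Lemma riemann y0 h n : 0 < h -> 0 < y0 - h/2 -> y0 + (INR n - 1/2) * h < 2 * PI ->
  Cl (y0 - h/2) - Cl (y0 + (INR n - 1/2) * h) <= h * psum (fun m => g (y0 + INR m * h)) n.
Proof.
  intros Hh H0. induction n; intro Hn.
  - simpl. replace (y0 + (0 - 1/2) * h) with (y0 - h/2) by field. lra.
  - rewrite S_INR in *. simpl psum.
    assert (IH := IHn ltac:(lra)).
    pose proof (mid_ineq (y0 + INR n * h) (h/2) ltac:(lra)) as Hm.
    pose proof (pos_INR n).
    assert (Hm2 := Hm ltac:(nra) ltac:(nra)).
    replace (y0 + INR n * h - h/2) with (y0 + (INR n - 1/2) * h) in Hm2 by field.
    replace (y0 + INR n * h + h/2) with (y0 + (INR n + 1 - 1/2) * h) in Hm2 by field.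
    lra.
Qed.

Lemma Cl_0 : Cl 0 = 0.
Proof.
  apply (UL_sequence _ _ _ (Cl_cv 0)). intros e He. exists 0%nat. intros n _.
  rewrite sum_eq_R0. unfold Rdist. rewrite Rminus_0_r, Rabs_R0. lra.
  intros i _. unfold clt. rewrite Rmult_0_r, sin_0. unfold Rdiv. ring.
Qed.


Definition nsq (z : Cx) : R := fst z ^ 2 + snd z ^ 2.

Lemma nsq_mul z w : nsq (Cmul z w) = nsq z * nsq w.
Proof. unfold nsq, Cmul. simpl. ring. Qed.

Lemma nsq_pow z n : nsq (Cpow z n) = nsq z ^ n.
Proof. induction n; simpl. unfold nsq, Cone; simpl; ring. rewrite nsq_mul, IHn. ring. Qed.

Lemma Cexpi_mul a b : Cmul (Cexpi a) (Cexpi b) = Cexpi (a + b).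
Proof. unfold Cmul, Cexpi. simpl. rewrite cos_plus, sin_plus. f_equal; ring. Qed.

Lemma Cpow_expi a n : Cpow (Cexpi a) n = Cexpi (INR n * a).
Proof.
  induction n.
  - simpl. unfold Cexpi, Cone. rewrite Rmult_0_l, cos_0, sin_0. reflexivity.
  - simpl Cpow. rewrite IHn, Cexpi_mul. f_equal. rewrite S_INR. ring.
Qed.

Lemma Cexpi_period a q : Cexpi (a + 2 * INR q * PI) = Cexpi a.
Proof. unfold Cexpi. rewrite cos_period, sin_period. reflexivity. Qed.

Lemma unit_norm rho k : (0 < k)%nat -> Cpow rho k = Cone -> nsq rho = 1.
Proof.
  intros Hk H. assert (E : nsq rho ^ k = 1).
  { rewrite <- nsq_pow, H. unfold nsq, Cone. simpl. ring. }
  assert (0 <= nsq rho) by (unfold nsq; nra).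
  destruct (Rtotal_order (nsq rho) 1) as [Hl|[He|Hg]]; auto.
  - pose proof (pow_lt_1_compat (nsq rho) k ltac:(lra) Hk). lra.
  - pose proof (Rlt_pow_R1 (nsq rho) k Hg Hk). lra.
Qed.

Lemma polar rho : nsq rho = 1 -> exists a, 0 <= a <= 2 * PI /\ rho = Cexpi a.
Proof.
  destruct rho as [x y]. unfold nsq. simpl. intro H.
  assert (Hx : -1 <= x <= 1) by nra.
  assert (Hs : sqrt (1 - x²) = Rabs y).
  { rewrite <- sqrt_Rsqr_abs. f_equal. unfold Rsqr. nra. }
  pose proof (acos_bound x).
  destruct (Rle_dec 0 y).
  - exists (acos x). split. lra. unfold Cexpi. rewrite cos_acos by lra. rewrite sin_acos by lra.
    rewrite Hs, Rabs_right by lra. reflexivity.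
  - exists (2 * PI - acos x). split. lra. unfold Cexpi.
    rewrite cos_minus, sin_minus, cos_2PI, sin_2PI, cos_acos, sin_acos by lra.
    rewrite Hs, Rabs_left by lra. f_equal; ring.
Qed.

Lemma cos1_2pi x : 0 <= x -> cos x = 1 -> exists s : nat, x = 2 * INR s * PI.
Proof.
  intros Hx H.
  assert (Hs : sin (x/2) = 0).
  { replace x with (2 * (x/2)) in H by field. rewrite cos_2a_sin in H. nra. }
  destruct (sin_eq_0_0 _ Hs) as [z Hz].
  assert (0 <= IZR z).
  { pose proof PI_RGT_0. destruct (Rle_dec 0 (IZR z)); auto. nra. }
  apply le_IZR in H0.
  exists (Z.to_nat z). rewrite INR_IZR_INZ, Z2Nat.id by lia. lra.
Qed.

Lemma root_setup k rho : (0 < k)%nat -> primitive_root rho k ->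
  exists alpha s, rho = Cexpi alpha /\ INR k * alpha = 2 * INR s * PI /\
    (forall n, (0 < n)%nat -> (n mod k <> 0)%nat -> cos (INR n * alpha) <> 1) /\
    (forall r, (0 < r < k)%nat -> ((s * r) mod k <> 0)%nat).
Proof.
  intros Hk [H1 H2].
  destruct (polar rho (unit_norm rho k Hk H1)) as [a [Ha ->]].
  rewrite Cpow_expi in H1.
  assert (Hc : cos (INR k * a) = 1) by (unfold Cexpi, Cone in H1; injection H1; auto).
  assert (Hka : 0 <= INR k * a) by (pose proof (pos_INR k); nra).
  destruct (cos1_2pi _ Hka Hc) as [s Hs].
  exists a, s. split; [reflexivity|]. split; [exact Hs|]. split.
  - intros n Hn Hmod Hcos.
    assert (Hsin : sin (INR n * a) = 0).
    { pose proof (sin2_cos2 (INR n * a)). rewrite Hcos in H. unfold Rsqr in H. nra. }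
    apply (H2 (n mod k)%nat). split. lia. apply Nat.mod_upper_bound; lia.
    rewrite Cpow_expi.
    assert (E : INR n * a = INR (n mod k) * a + 2 * INR (n / k * s) * PI).
    { rewrite (Nat.div_mod n k) at 1 by lia. rewrite plus_INR, !mult_INR, Rmult_plus_distr_r.
      replace (INR k * INR (n / k) * a) with (INR (n/k) * (INR k * a)) by ring. rewrite Hs. ring. }
    rewrite <- Cexpi_period with (q := (n / k * s)%nat), <- E.
    unfold Cexpi, Cone. rewrite Hcos, Hsin. reflexivity.
  - intros r Hr Hmod. apply (H2 r Hr). rewrite Cpow_expi.
    assert (E : INR r * a = 0 + 2 * INR (s * r / k) * PI).
    { assert (Ek : (s * r = k * (s * r / k))%nat).
      { pose proof (Nat.div_mod (s*r) k ltac:(lia)). lia. }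
      assert (0 < INR k) by (apply lt_0_INR; lia).
      apply (Rmult_eq_reg_l (INR k)). 2: lra.
      replace (INR k * (INR r * a)) with (INR r * (INR k * a)) by ring. rewrite Hs.
      replace (INR k * (0 + 2 * INR (s * r / k) * PI)) with (2 * INR (k * (s * r / k)) * PI) by (rewrite mult_INR; ring).
      rewrite <- Ek, mult_INR. ring. }
    rewrite E, Cexpi_period. unfold Cexpi, Cone. rewrite cos_0, sin_0. reflexivity.
Qed.


Definition m0 (k : nat) (theta : R) : R := 2 * PI / INR k - theta.
Definition K1 (k : nat) (theta : R) : R := ln 2 + Rabs (g (m0 k theta)).
Definition Kc (k : nat) (theta : R) : R :=
  3 * K1 k theta + Rabs (g (m0 k theta)) + ln 2 + Rabs (g theta).

Section Main.
Variables (k M s : nat) (theta alpha : R).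
Hypothesis Hk : (0 < k)%nat.
Hypothesis HM : (0 < M)%nat.
Hypothesis Ht : 0 < theta.
Hypothesis Ht2 : theta < 2 * PI / INR k.
Hypothesis Hks : INR k * alpha = 2 * INR s * PI.
Hypothesis Hsr : forall r, (0 < r < k)%nat -> ((s * r) mod k <> 0)%nat.
Hypothesis Hprim : forall n, (0 < n)%nat -> (n mod k <> 0)%nat -> cos (INR n * alpha) <> 1.

Definition hh := theta / INR M.
Definition beta r := 2 * PI * INR ((s * r) mod k) / INR k.
Definition yy r m := beta r + INR r * hh / INR k + INR m * hh.

Lemma kpos : 0 < INR k.
Proof. apply lt_0_INR; lia. Qed.
Lemma k1 : 1 <= INR k.
Proof. apply (le_INR 1); lia. Qed.
Lemma Mpos : 1 <= INR M.
Proof. apply (le_INR 1); lia. Qed.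
Lemma hh_pos : 0 < hh.
Proof. unfold hh. pose proof Mpos. apply Rdiv_lt_0_compat; lra. Qed.
Lemma hh_le : hh <= theta.
Proof. unfold hh. pose proof Mpos. apply (Rmult_le_reg_r (INR M)). lra. unfold Rdiv. rewrite Rmult_assoc, Rinv_l by lra. nra. Qed.
Lemma theta_eq : INR M * hh = theta.
Proof. unfold hh. pose proof Mpos. field. lra. Qed.
Lemma tk : INR k * theta < 2 * PI.
Proof. pose proof kpos. apply (Rmult_lt_compat_l (INR k)) in Ht2; auto.
  replace (INR k * (2 * PI / INR k)) with (2 * PI) in Ht2 by (field; lra). lra. Qed.
Lemma t2pi : theta < 2 * PI.
Proof. pose proof tk. pose proof k1. nra. Qed.

Lemma beta_k : beta k = 0.
Proof. unfold beta. rewrite Nat.Div0.mod_mul. simpl. unfold Rdiv. ring. Qed.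

Lemma beta_range r : (0 < r < k)%nat -> 2 * PI / INR k <= beta r <= 2 * PI - 2 * PI / INR k.
Proof.
  intro Hr. pose proof (Hsr r Hr). pose proof (Nat.mod_upper_bound (s * r) k ltac:(lia)).
  assert (A : 1 <= INR ((s * r) mod k)) by (apply (le_INR 1); lia).
  assert (B : INR ((s * r) mod k) <= INR k - 1).
  { replace (INR k - 1) with (INR (k-1)) by (rewrite minus_INR by lia; simpl; ring). apply le_INR. lia. }
  pose proof kpos. pose proof PI_RGT_0. unfold beta. split.
  - unfold Rdiv. apply Rmult_le_compat_r. apply Rlt_le, Rinv_0_lt_compat; lra. nra.
  - replace (2 * PI - 2 * PI / INR k) with (2 * PI * (INR k - 1) / INR k) by (field; lra).
    unfold Rdiv. apply Rmult_le_compat_r. apply Rlt_le, Rinv_0_lt_compat; lra. nra.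
Qed.

Lemma beta_bound r : (1 <= r <= k)%nat -> 0 <= beta r /\ beta r + theta < 2 * PI.
Proof.
  intro Hr. destruct (Nat.eq_dec r k) as [->|Hne].
  - rewrite beta_k. pose proof t2pi. lra.
  - pose proof (beta_range r ltac:(lia)). pose proof kpos. pose proof PI_RGT_0.
    assert (0 < 2 * PI / INR k) by (apply Rdiv_lt_0_compat; lra). lra.
Qed.

Lemma yy_range r m : (1 <= r <= k)%nat -> (m < M)%nat -> 0 < yy r m < 2 * PI /\ beta r < yy r m <= beta r + theta.
Proof.
  intros Hr Hm. pose proof (beta_bound r Hr). pose proof hh_pos. pose proof kpos.
  assert (A1 : 0 < INR r * hh / INR k).
  { apply Rdiv_lt_0_compat; auto. apply Rmult_lt_0_compat; auto. apply lt_0_INR; lia. }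
  assert (A2 : INR r * hh / INR k <= hh).
  { apply (Rmult_le_reg_r (INR k)); auto. unfold Rdiv. rewrite Rmult_assoc, Rinv_l by lra.
    rewrite Rmult_1_r. assert (INR r <= INR k) by (apply le_INR; lia). nra. }
  assert (A3 : INR m * hh <= (INR M - 1) * hh).
  { apply Rmult_le_compat_r. lra.
    replace (INR M - 1) with (INR (M-1)) by (rewrite minus_INR by lia; simpl; ring). apply le_INR. lia. }
  pose proof (pos_INR m). pose proof theta_eq.
  assert (0 <= INR m * hh) by nra.
  unfold yy. split; split; nra.
Qed.

Lemma Cl_lip2 m u v : 0 < m <= PI -> m <= u <= 2 * PI - m -> m <= v <= 2 * PI - m ->
  Rabs (Cl u - Cl v) <= Rabs (u - v) * (ln 2 + Rabs (g m)).
Proof.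
  intros Hm Hu Hv. destruct (Rle_dec u v).
  - rewrite <- Rabs_Ropp. replace (- (Cl u - Cl v)) with (Cl v - Cl u) by ring.
    rewrite (Rabs_left1 (u - v)) by lra. replace (- (u - v)) with (v - u) by ring.
    apply Cl_lip; lra.
  - rewrite (Rabs_right (u - v)) by lra. apply Cl_lip; lra.
Qed.

Lemma class_bound r : (1 <= r <= k)%nat ->
  Cl (beta r) - Cl (beta r + theta) - hh * Kc k theta <= hh * psum (fun m => g (yy r m)) M.
Proof.
  intro Hr.
  pose proof hh_pos as Hh. pose proof hh_le as Hhl. pose proof theta_eq as Hte. pose proof kpos as Hkp.
  pose proof ln2_pos as Hl2. pose proof PI_RGT_0 as HPI.
  set (y0 := beta r + INR r * hh / INR k).
  assert (Hy : forall m, yy r m = y0 + INR m * hh) by (intro; unfold yy, y0; ring).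
  rewrite (psum_last _ M) by lia.
  rewrite (psum_ext _ (fun m => g (y0 + INR m * hh))) by (intros; rewrite Hy; auto).
  pose proof (yy_range r (M - 1) Hr ltac:(lia)) as [[Y1 Y2] [Y3 Y4]].
  assert (Hlast : y0 + (INR (M - 1) - 1/2) * hh = yy r (M - 1) - hh/2) by (rewrite Hy; lra).
  assert (A1 : INR r * hh / INR k <= hh).
  { apply (Rmult_le_reg_r (INR k)); auto. unfold Rdiv. rewrite Rmult_assoc, Rinv_l by lra.
    rewrite Rmult_1_r. assert (INR r <= INR k) by (apply le_INR; lia). nra. }
  assert (A0 : 0 < INR r * hh / INR k).
  { apply Rdiv_lt_0_compat; auto. apply Rmult_lt_0_compat; auto. apply lt_0_INR; lia. }
  assert (K1pos : 0 <= K1 k theta) by (unfold K1; pose proof (Rabs_pos (g (m0 k theta))); lra).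
  assert (HM1 : INR (M - 1) = INR M - 1) by (rewrite minus_INR by lia; simpl; ring).
  destruct (Nat.eq_dec r k) as [->|Hne].
  -
    assert (Hy0 : y0 = hh) by (unfold y0; rewrite beta_k; field; lra).
    assert (Hyl : yy k (M - 1) = theta) by (rewrite Hy, Hy0, HM1; lra).
    assert (R := riemann y0 hh (M - 1) Hh ltac:(lra) ltac:(rewrite Hlast; lra)).
    rewrite Hlast, Hyl, Hy0 in R.
    replace (hh - hh/2) with (hh/2) in R by field.
    pose proof (Cl_up 0 (hh/2) ltac:(lra) ltac:(pose proof t2pi; lra)) as U1.
    pose proof (Cl_up (theta - hh/2) theta ltac:(lra) t2pi) as U2.
    rewrite Cl_0 in U1. rewrite beta_k, Rplus_0_l, Cl_0.
    replace (y0 + INR (M - 1) * hh) with (yy k (M - 1)) by (rewrite Hy; auto). rewrite Hyl.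
    pose proof (Rle_abs (- g theta)). rewrite Rabs_Ropp in H.
    assert (HK : hh * (ln 2 + Rabs (g theta)) <= hh * Kc k theta).
    { apply Rmult_le_compat_l. lra. unfold Kc. pose proof (Rabs_pos (g (m0 k theta))). lra. }
    assert (hh * - g theta <= hh * Rabs (g theta)) by (apply Rmult_le_compat_l; lra).
    rewrite Rmult_plus_distr_l. rewrite Hy0. lra.
  -
    pose proof (beta_range r ltac:(lia)) as [B1 B2].
    assert (Hk2 : 2 <= INR k) by (apply (le_INR 2); lia).
    assert (Hm0 : 0 < m0 k theta <= PI).
    { unfold m0. split. lra. assert (2 * PI / INR k <= PI).
      { apply (Rmult_le_reg_r (INR k)); auto. unfold Rdiv. rewrite Rmult_assoc, Rinv_l by lra. nra. }
      lra. }
    assert (R := riemann y0 hh (M - 1) Hh ltac:(unfold y0; lra) ltac:(rewrite Hlast; lra)).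
    rewrite Hlast in R.
    unfold m0 in Hm0.
    pose proof (Cl_lip2 (m0 k theta) (y0 - hh/2) (beta r) ltac:(unfold m0; lra)
                  ltac:(unfold m0, y0; lra) ltac:(unfold m0; lra)) as L1.
    pose proof (Cl_lip2 (m0 k theta) (yy r (M - 1) - hh/2) (beta r + theta) ltac:(unfold m0; lra)
                  ltac:(unfold m0; lra) ltac:(unfold m0; lra)) as L2.
    assert (E1 : Rabs (y0 - hh/2 - beta r) <= hh) by (apply Rabs_le; unfold y0; lra).
    assert (E2 : Rabs (yy r (M - 1) - hh/2 - (beta r + theta)) <= 3/2 * hh).
    { apply Rabs_le. rewrite Hy, HM1. unfold y0. nra. }
    fold (K1 k theta) in L1, L2.
    assert (L1' : Cl (beta r) - hh * K1 k theta <= Cl (y0 - hh/2)).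
    { pose proof (Rabs_pos (y0 - hh / 2 - beta r)).
      assert (Rabs (y0 - hh / 2 - beta r) * K1 k theta <= hh * K1 k theta) by nra.
      pose proof (Rle_abs (- (Cl (y0 - hh / 2) - Cl (beta r)))). rewrite Rabs_Ropp in H1. lra. }
    assert (L2' : Cl (yy r (M - 1) - hh/2) <= Cl (beta r + theta) + 3/2 * hh * K1 k theta).
    { pose proof (Rabs_pos (yy r (M - 1) - hh / 2 - (beta r + theta))).
      assert (Rabs (yy r (M - 1) - hh / 2 - (beta r + theta)) * K1 k theta <= 3/2 * hh * K1 k theta) by nra.
      pose proof (Rle_abs (Cl (yy r (M - 1) - hh / 2) - Cl (beta r + theta))). lra. }
    assert (G1 : g (m0 k theta) <= g (y0 + INR (M - 1) * hh)).
    { rewrite <- Hy. apply g_ge_m. unfold m0; lra. unfold m0; lra. }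
    pose proof (Rle_abs (- g (m0 k theta))). rewrite Rabs_Ropp in H.
    assert (HK : hh * (5/2 * K1 k theta + Rabs (g (m0 k theta))) <= hh * Kc k theta).
    { apply Rmult_le_compat_l. lra. unfold Kc. pose proof (Rabs_pos (g theta)). lra. }
    assert (hh * g (m0 k theta) <= hh * g (y0 + INR (M - 1) * hh)) by (apply Rmult_le_compat_l; lra).
    assert (hh * - g (m0 k theta) <= hh * Rabs (g (m0 k theta))) by (apply Rmult_le_compat_l; lra).
    rewrite Rmult_plus_distr_l. rewrite (Hy (M - 1)%nat). lra.
Qed.

Lemma ralpha r : INR r * alpha = beta r + 2 * INR ((s * r) / k) * PI.
Proof.
  pose proof kpos. apply (Rmult_eq_reg_l (INR k)). 2: lra.
  replace (INR k * (INR r * alpha)) with (INR r * (INR k * alpha)) by ring. rewrite Hks.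
  unfold beta.
  replace (INR k * (2 * PI * INR ((s * r) mod k) / INR k + 2 * INR (s * r / k) * PI))
    with (2 * PI * (INR k * INR (s * r / k) + INR ((s * r) mod k))) by (field; lra).
  rewrite <- mult_INR, <- plus_INR, <- Nat.div_mod by lia. rewrite mult_INR. ring.
Qed.

Lemma beta_sum x : sum1 (fun r => Cl (beta r + x)) k = Cl (INR k * x) / INR k.
Proof.
  rewrite <- (Cl_sum_id k s alpha x Hk Hks Hprim). apply sum1_ext. intros r _.
  rewrite ralpha. replace (x + (beta r + 2 * INR (s * r / k) * PI)) with ((beta r + x) + 2 * INR (s * r / k) * PI) by ring.
  rewrite Cl_period. reflexivity.
Qed.

Lemma factor r m : (1 <= r <= k)%nat -> (m < M)%nat ->
  / Cnorm (Csub (Cmul (Cpow (Cexpi alpha) (k * m + r)) (Cexpi (INR (k * m + r) * theta / INR (M * k)))) Cone)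
  = exp (- g (yy r m)).
Proof.
  intros Hr Hm. pose proof kpos. pose proof Mpos.
  rewrite Cpow_expi, Cexpi_mul.
  assert (E : INR (k * m + r) * alpha + INR (k * m + r) * theta / INR (M * k)
              = yy r m + 2 * INR (s * m + s * r / k) * PI).
  { rewrite plus_INR, !mult_INR. unfold yy, hh.
    replace ((INR k * INR m + INR r) * alpha) with (INR m * (INR k * alpha) + INR r * alpha) by ring.
    rewrite Hks, ralpha. rewrite (plus_INR (s * m)), (mult_INR s m). field. lra. }
  rewrite E, Cexpi_period.
  pose proof (yy_range r m Hr Hm) as [[Y1 Y2] _].
  pose proof (D_pos _ (conj Y1 Y2)) as HD.
  set (y := yy r m) in *.
  unfold Cnorm, Csub, Cexpi, Cone. simpl fst. simpl snd.
  replace ((cos y - 1) ^ 2 + (sin y - 0) ^ 2) with (2 - 2 * cos y).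
  2: { pose proof (sin2_cos2 y). unfold Rsqr in H1. nra. }
  unfold g.
  assert (Es : sqrt (2 - 2 * cos y) = exp (ln (2 - 2 * cos y) / 2)).
  { apply sqrt_lem_1. lra. apply Rlt_le, exp_pos.
    rewrite <- exp_plus. replace (ln (2 - 2 * cos y) / 2 + ln (2 - 2 * cos y) / 2) with (ln (2 - 2 * cos y)) by field.
    apply exp_ln. lra. }
  rewrite Es, exp_Ropp. reflexivity.
Qed.
End Main.


Lemma prod_split f a b : prod_from1 f (a + b) = prod_from1 f a * prod_from1 (fun i => f (a + i)%nat) b.
Proof. induction b; simpl. rewrite Nat.add_0_r. ring. rewrite Nat.add_succ_r. simpl. rewrite IHb. ring. Qed.

Lemma prod_exp F G n : (forall i, (1 <= i <= n)%nat -> F i = exp (- G i)) ->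
  prod_from1 F n = exp (- sum1 G n).
Proof.
  induction n; intro H; simpl.
  - rewrite Ropp_0, exp_0. reflexivity.
  - rewrite IHn by (intros; apply H; lia). rewrite H by lia.
    rewrite <- exp_plus. f_equal. ring.
Qed.

Theorem proposition4p6 :
  forall (k : nat) (theta : R),
    (0 < k)%nat ->
    0 < theta < 2 * PI / INR k ->
    forall cl : R, Cl2_is (INR k * theta) cl ->
    exists C : R, 0 < C /\
      forall (rho : Cx), primitive_root rho k ->
      forall N : nat, (1 <= N)%nat -> Nat.divide k N ->
        prod_from1
          (fun j => / Cnorm (Csub (Cmul (Cpow rho j)
                                        (Cexpi (INR j * theta / INR N))) Cone))
          N
        <= C * INR N ^ (4 * k)
             * exp (INR N / INR k * (cl / (INR k * theta))).
Proof.
  intros k theta Hk [Ht Ht2] cl Hcl.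
  exists (exp (INR k * Kc k theta)). split. apply exp_pos.
  intros rho Hrho N HN [M HNM].
  destruct (root_setup k rho Hk Hrho) as [alpha [s [Erho [Hks [Hprim Hsr]]]]].
  assert (HM : (0 < M)%nat) by (subst N; destruct M; simpl in HN; lia).
  subst rho N.
  set (f := fun j => / Cnorm (Csub (Cmul (Cpow (Cexpi alpha) j)
                      (Cexpi (INR j * theta / INR (M * k)))) Cone)).
  set (Y := yy k M s theta).
  assert (HP : forall M', (M' <= M)%nat ->
     prod_from1 f (k * M') = exp (- psum (fun m => sum1 (fun r => g (Y r m)) k) M')).
  { induction M'; intro HM'.
    - rewrite Nat.mul_0_r. simpl. rewrite Ropp_0, exp_0. reflexivity.
    - replace (k * S M')%nat with (k * M' + k)%nat by lia.
      rewrite prod_split, IHM' by lia.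
      rewrite (prod_exp _ (fun r => g (Y r M'))).
      + rewrite <- exp_plus. f_equal. simpl psum. ring.
      + intros r Hr. unfold f, Y.
        apply (factor k M s theta alpha Hk HM Ht Ht2 Hks Hsr r M' Hr). lia. }
  replace (prod_from1 f (M * k)) with (prod_from1 f (k * M)) by (f_equal; lia).
  rewrite (HP M (le_n M)).
  set (S := psum (fun m => sum1 (fun r => g (Y r m)) k) M).
  pose proof (hh_pos k M theta Hk HM Ht) as Hh.
  pose proof (kpos k M Hk HM) as Hkp.
  assert (HS : hh M theta * S >= - (cl / INR k) - INR k * (hh M theta * Kc k theta)).
  { unfold S. rewrite <- sum1_psum_swap.
    rewrite <- sum1_scal.
    assert (B : sum1 (fun r => Cl (beta k s r) - Cl (beta k s r + theta) - hh M theta * Kc k theta) k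
              <= sum1 (fun r => hh M theta * psum (fun m => g (Y r m)) M) k).
    { apply sum1_le. intros r Hr. unfold Y. apply (class_bound k M s theta Hk HM Ht Ht2 Hsr r Hr). }
    rewrite (sum1_ext _ (fun r => (Cl (beta k s r + 0) - Cl (beta k s r + theta)) + (- (hh M theta * Kc k theta)))) in B.
    2: { intros r _. rewrite Rplus_0_r. ring. }
    rewrite sum1_plus in B.
    rewrite (sum1_ext _ (fun r => Cl (beta k s r + 0) + (-1) * Cl (beta k s r + theta))) in B.
    2: { intros r _. ring. }
    rewrite sum1_plus, sum1_scal, sum1_const in B.
    rewrite (beta_sum k M s alpha Hk HM Hks Hprim 0), (beta_sum k M s alpha Hk HM Hks Hprim theta) in B.
    rewrite Rmult_0_r, Cl_0, (Cl_is _ _ Hcl) in B.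
    unfold Rdiv in *. lra. }
  assert (Hexp : hh M theta * (INR (M * k) / INR k * (cl / (INR k * theta))) = cl / INR k).
  { unfold hh. rewrite mult_INR. pose proof (Mpos k M Hk HM). field. repeat split; lra. }
  assert (HS2 : - S <= INR (M * k) / INR k * (cl / (INR k * theta)) + INR k * Kc k theta).
  { apply (Rmult_le_reg_l (hh M theta)). exact Hh.
    rewrite Rmult_plus_distr_l, Hexp. nra. }
  assert (HN1 : 1 <= INR (M * k) ^ (4 * k)).
  { apply pow_R1_Rle. apply (le_INR 1). lia. }
  apply Rle_trans with (exp (INR k * Kc k theta) * exp (INR (M * k) / INR k * (cl / (INR k * theta)))).
  - rewrite <- exp_plus. destruct (Rle_lt_or_eq_dec _ _ (Rle_trans _ _ _ HS2 (Req_le _ _ (Rplus_comm _ _)))) as [L|L].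
    + apply Rlt_le, exp_increasing. exact L.
    + rewrite L. apply Rle_refl.
  - pose proof (exp_pos (INR k * Kc k theta)). pose proof (exp_pos (INR (M * k) / INR k * (cl / (INR k * theta)))).
    apply Rmult_le_compat_r. lra.
    rewrite <- (Rmult_1_r (exp (INR k * Kc k theta))) at 1. apply Rmult_le_compat_l; lra.
Qed.
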